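(* Let $k>0$ and $\ell\ge0$ be integers, $q=2^k$ and $Q=2^{\ell}$. Then the polynomial $(X^{q^2}+X^q+X)\circ X^{Q+1}=X^{q^2(Q+1)}+X^{q(Q+1)}+X^{Q+1}$ is injective on $u+\mathbb{F}_q$ for every $u\in\mathbb{F}_{q^3}$ if and only if $\gcd(q-1,Q+1)=1$, or equivalently, if and only if $\operatorname{ord}_2(k)\le\operatorname{ord}_2(\ell)$.
   Context: For a nonzero integer $N$, $\operatorname{ord}_2(N)$ is the largest integer $s\ge0$ with $2^s\mid N$, and $\operatorname{ord}_2(0)=\infty$. *)

(* Defs.v *)
From HB Require Import structures.
From mathcomp Require Import all_boot all_order all_algebra all_field.
Set Implicit Arguments. Unset Strict Implicit. Unset Printing Implicit Defensive.
Import GRing.Theory.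
Local Open Scope ring_scope.

Definition f3 (R : nzRingType) (q Q : nat) : {poly R} :=
  ('X^(q ^ 2) + 'X^q + 'X) \Po 'X^(Q.+1).

Definition subFq (F : finFieldType) (q : nat) : pred F := [pred a | a ^+ q == a].

Definition inj_on_coset (F : finFieldType) (q : nat) (p : {poly F}) (u : F) : Prop :=
  forall a b : F, a \in subFq q -> b \in subFq q -> p.[u + a] = p.[u + b] -> a = b.

(* ord_2(n) <= ord_2(m), with the convention ord_2(0) = infinity. *)
Definition ord2_le (n m : nat) : Prop :=
  (m = 0)%N \/ (n <> 0%N /\ (logn 2 n <= logn 2 m)%N).

(* Main.v *)
Require Import Defs.
From HB Require Import structures.
From mathcomp Require Import all_boot all_order all_algebra all_field.
From mathcomp Require Import all_solvable.
From mathcomp Require Import ring zify.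
Set Implicit Arguments. Unset Strict Implicit. Unset Printing Implicit Defensive.
Import GRing.Theory.


Lemma gcd_exp2_aux n : forall a b, a + b <= n ->
  gcdn (2 ^ a - 1) (2 ^ b - 1) = 2 ^ gcdn a b - 1.
Proof.
elim: n => [|n IH] a b hab.
  have -> : a = 0 by lia.
  by have -> : b = 0 by lia.
case: a hab => [|a] hab; first by rewrite gcd0n expn0 subnn gcd0n.
case: b hab => [|b] hab; first by rewrite gcdn0 expn0 subnn gcdn0.
wlog le: a b hab / b <= a.
  move=> W; case: (leqP b a) => h; first exact: W.
  by rewrite (gcdnC (2 ^ a.+1 - 1)) (gcdnC a.+1); apply: W; lia.
have e1 : 2 ^ a.+1 - 1 = 2 ^ (a - b) * (2 ^ b.+1 - 1) + (2 ^ (a - b) - 1).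
  have -> : a.+1 = (a - b) + b.+1 by lia.
  rewrite expnD.
  have := expn_gt0 2 (a - b); have := expn_gt0 2 b.+1.
  set X := 2 ^ (a - b); set Y := 2 ^ b.+1; nia.
rewrite e1 gcdnC gcdnMDl IH; last by lia.
congr (2 ^ _ - 1).
have -> : a.+1 = (a - b) + b.+1 by lia.
by rewrite [RHS]gcdnC gcdnDr.
Qed.

Lemma gcd_exp2 a b : gcdn (2 ^ a - 1) (2 ^ b - 1) = 2 ^ gcdn a b - 1.
Proof. exact: (@gcd_exp2_aux (a + b)). Qed.

Lemma exp2m1_inj a b : 2 ^ a - 1 = 2 ^ b - 1 -> a = b.
Proof.
move=> h; apply/eqP; rewrite -(@eqn_exp2l 2) //; apply/eqP.
have := expn_gt0 2 a; have := expn_gt0 2 b; lia.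
Qed.

Lemma odd_exp2m1 k : 0 < k -> odd (2 ^ k - 1).
Proof.
move=> k0; have := oddX 2 k.
have h1 : 2 ^ k = (2 ^ k - 1).+1 by have := expn_gt0 2 k; lia.
rewrite {1}h1 /= orbF.
by case: (k) k0 => // k' _ /= /negbFE.
Qed.

Lemma gcd2_log k l : 0 < k -> 0 < l ->
  (gcdn k (l * 2) = gcdn k l) <-> logn 2 k <= logn 2 l.
Proof.
move=> k0 l0.
have lg2 : logn 2 (l * 2) = (logn 2 l).+1.
  by rewrite lognM // (@logn_prime 2 2) // eqxx addn1.
have Lg := logn_gcd 2 k0 l0.
have Lg2 : logn 2 (gcdn k (l * 2)) = minn (logn 2 k) (logn 2 l).+1.
  by rewrite logn_gcd // ?lg2 //; lia.
split.
  by move=> e; move: Lg2; rewrite e Lg; lia.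
move=> le.
have hg : gcdn k l %| gcdn k (l * 2).
  by rewrite dvdn_gcd dvdn_gcdl /= dvdn_mulr // dvdn_gcdr.
have gh : gcdn k (l * 2) %| gcdn k l * 2.
  rewrite muln_gcdl dvdn_gcd dvdn_gcdr andbT.
  by apply: dvdn_mulr; apply: dvdn_gcdl.
case/dvdnP: hg => c hc.
have h0 : 0 < gcdn k l by rewrite gcdn_gt0 k0.
move: gh; rewrite hc (mulnC (gcdn k l) 2) dvdn_pmul2r // => c2.
have cle := dvdn_leq (isT : 0 < 2) c2.
have c0 : 0 < c.
  case: c hc {c2 cle} => // hc. by have := gcdn_gt0 k (l * 2); rewrite hc k0.
have [c1|c2'] : c = 1 \/ c = 2 by lia.
  by rewrite c1 mul1n.
exfalso; move: Lg2; rewrite hc c2' mulnC lognM // (@logn_prime 2 2) // eqxx Lg.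
lia.
Qed.

Lemma coprime_ord2 k l : 0 < k -> coprime (2 ^ k - 1) (2 ^ l + 1) <-> ord2_le k l.
Proof.
move=> k0; case: l => [|l].
  split=> _; last by rewrite expn0 coprimen2 odd_exp2m1.
  by left.
set A := 2 ^ k - 1; set B := 2 ^ l.+1 + 1; set C := 2 ^ l.+1 - 1.
have BC : B * C = 2 ^ (l.+1 * 2) - 1.
  rewrite mulnC expnM /B /C; have := expn_gt0 2 l.+1; set X := 2 ^ l.+1; nia.
have coBC : coprime B C.
  have -> : B = 2 + C by rewrite /B /C; have := expn_gt0 2 l.+1; lia.
  rewrite /coprime gcdnC gcdnDr.
  by have := coprimen2 C; rewrite /coprime => ->; rewrite /C odd_exp2m1.
have step : coprime A B <-> gcdn A (B * C) = gcdn A C.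
  split; first by move=> co; rewrite Gauss_gcdr.
  move=> e; rewrite /coprime; apply/eqP.
  have d1 : gcdn A B %| gcdn A C.
    by rewrite -e dvdn_gcd dvdn_gcdl /= dvdn_mulr // dvdn_gcdr.
  have d2 : gcdn A B %| gcdn B C.
    by rewrite dvdn_gcd dvdn_gcdr (dvdn_trans d1) // dvdn_gcdr.
  by move: d2; rewrite (eqP coBC) dvdn1 => /eqP.
rewrite step BC /A /C !gcd_exp2.
split.
  by move=> /exp2m1_inj /(gcd2_log k0 (isT : 0 < l.+1)) h; right; split => //; lia.
case => [//|[_ h]].
by rewrite (proj2 (gcd2_log k0 (isT : 0 < l.+1)) h).
Qed.

Local Open Scope ring_scope.

Section Fld.
Variable F : finFieldType.
Hypothesis c2 : (2%N \in [pchar F]).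

Lemma addxx (x : F) : x + x = 0.
Proof. by rewrite -mulr2n -mulr_natr (pcharf0 c2) mulr0. Qed.

Lemma frob2 j (x y : F) : (x + y) ^+ (2 ^ j) = x ^+ (2 ^ j) + y ^+ (2 ^ j).
Proof.
elim: j => [|j IH]; first by rewrite expn0 !expr1.
by rewrite expnSr !exprM IH sqrrD mulr2n addxx addr0.
Qed.

Definition Lq (q : nat) (y : F) := y ^+ (q * q) + y ^+ q + y.

Variable k : nat.
Local Notation q := (2 ^ k)%N.

Lemma LD (x y : F) : Lq q (x + y) = Lq q x + Lq q y.
Proof.
rewrite /Lq -expnD frob2 frob2.
by ring.
Qed.

Lemma LZ (c y : F) : c ^+ q = c -> Lq q (c * y) = c * Lq q y.
Proof.
move=> hc; rewrite /Lq !exprMn exprM hc hc; by rewrite !mulrDr.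
Qed.

Lemma Lfix (c : F) : c ^+ q = c -> Lq q c = c.
Proof. by move=> hc; rewrite /Lq exprM hc hc addxx add0r. Qed.

Lemma LX l (y : F) : Lq q (y ^+ (2 ^ l)) = (Lq q y) ^+ (2 ^ l).
Proof. by rewrite /Lq !frob2 -!exprM !(mulnC (2 ^ l)%N). Qed.

Variable l : nat.
Local Notation Q := (2 ^ l)%N.

Lemma f3E (x : F) : (f3 F q Q).[x] = Lq q (x ^+ Q.+1).
Proof. by rewrite /f3 horner_comp !hornerE /Lq. Qed.

Lemma key (u a : F) : a ^+ q = a ->
  (f3 F q Q).[u + a] = (f3 F q Q).[u] + (a + Lq q u) ^+ Q.+1 + (Lq q u) ^+ Q.+1.
Proof.
move=> ha.
have haQ : (a ^+ Q) ^+ q = a ^+ Q by rewrite exprAC ha.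
have haQa : (a ^+ Q * a) ^+ q = a ^+ Q * a by rewrite exprMn haQ ha.
rewrite !f3E; set T := Lq q u.
rewrite !exprSr [in LHS]frob2 [in RHS]frob2 [in LHS]mulrDl ![in LHS]mulrDr !LD.
rewrite (mulrC (u ^+ Q) a) (LZ (u ^+ Q) ha) (LZ u haQ) (Lfix haQa) LX -/T.
set A := a ^+ Q; set TQ := T ^+ Q; set U := Lq q (u ^+ Q * u).
apply/eqP; rewrite -subr_eq0; apply/eqP.
transitivity (- ((TQ * T) *+ 2)); first by ring.
by rewrite mulr2n addxx oppr0.
Qed.
End Fld.

Section Pow.
Variable F : finFieldType.

Lemma pow_inj (n m : nat) : (0 < n)%N -> (0 < m)%N -> coprime n m ->
  forall a b : F, a ^+ n.+1 = a -> b ^+ n.+1 = b -> a ^+ m = b ^+ m -> a = b.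
Proof.
move=> n0 m0 co a b ha hb hab.
have m0' : (m == 0)%N = false by case: (m) m0.
have [a0|a0] := eqVneq a 0.
  by move: hab; rewrite a0 expr0n m0' => /esym/eqP; rewrite expf_eq0 m0 /= => /eqP.
have [b0|b0] := eqVneq b 0.
  by move: hab; rewrite b0 expr0n m0' => /eqP; rewrite expf_eq0 m0 /= (negbTE a0).
have hn (c : F) : c != 0 -> c ^+ n.+1 = c -> c ^+ n = 1.
  move=> c0; rewrite exprSr; rewrite -[X in _ = X -> _](mul1r c) => h; exact: (mulIf c0 h).
set x := a / b.
have xn : x ^+ n = 1 by rewrite exprMn exprVn (hn a a0 ha) (hn b b0 hb) invr1 mulr1.
have xm : x ^+ m = 1 by rewrite exprMn exprVn hab divff // expf_eq0 negb_and b0 orbT.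
have [c _ /dvdnP [e he]] := Bezoutl m n0.
move: co; rewrite /coprime => /eqP g1; rewrite g1 in he.
have : x ^+ (1 + c * m) = 1 by rewrite he mulnC exprM xn expr1n.
rewrite exprD expr1 mulnC exprM xm expr1n mulr1 => x1.
by apply: divr1_eq.
Qed.

Lemma pow_noninj (n m : nat) : (0 < n)%N -> (n %| #|F|.-1)%N -> ~~ coprime n m ->
  exists a b : F, [/\ a ^+ n.+1 = a, b ^+ n.+1 = b, a ^+ m = b ^+ m & a != b].
Proof.
move=> n0 nN nco.
set N := #|F|.-1.
have N0 : (0 < N)%N by rewrite /N -ltnS prednK ?finNzRing_gt1 // ltnW // finNzRing_gt1.
have : has N.-primitive_root (enum (predC1 (0 : F))).
  apply: has_prim_root => //.
  - apply/allP => x; rewrite mem_enum /= => x0.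
    rewrite unity_rootE; apply/eqP; apply: (mulIf x0).
    by rewrite -exprSr /N prednK ?expf_card ?mul1r // ltnW // finNzRing_gt1.
  - exact: enum_uniq.
  - by rewrite -cardE cardC1.
case/hasP => z _ zprim.
set d := gcdn n m.
have dn : (d %| n)%N by apply: dvdn_gcdl.
have dm : (d %| m)%N by apply: dvdn_gcdr.
have dp := dvdn_prim_root zprim (dvdn_trans dn nN).
set w := z ^+ (N %/ d) in dp.
have wd := prim_expr_order dp.
have wdiv (j : nat) : (d %| j)%N -> w ^+ j = 1.
  by move=> /dvdnP [e ->]; rewrite mulnC exprM wd expr1n.
exists w, 1; split.
- by rewrite exprSr wdiv // mul1r.
- by rewrite expr1n.
- by rewrite wdiv // expr1n.
- apply/negP => /eqP w1.
  have := prim_order_dvd dp 1; rewrite expr1 w1 eqxx dvdn1 => /eqP d1.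
  by move: nco; rewrite /coprime -/d d1.
Qed.
End Pow.

Local Close Scope ring_scope.

Theorem lemma3p2 (k l : nat) (F : finFieldType) :
  (0 < k)%N -> (2%N \in [pchar F]%R) -> #|F| = (2 ^ (3 * k))%N ->
  ((forall u : F, inj_on_coset (2 ^ k) (f3 F (2 ^ k) (2 ^ l)) u)
     <-> coprime (2 ^ k - 1) (2 ^ l + 1))
  /\
  ((forall u : F, inj_on_coset (2 ^ k) (f3 F (2 ^ k) (2 ^ l)) u)
     <-> ord2_le k l).
Proof.
Local Open Scope ring_scope.
move=> k0 c2 cardF.
have qpos : (2 ^ k = (2 ^ k - 1).+1)%N by have := expn_gt0 2 k; lia.
have n0 : (0 < 2 ^ k - 1)%N.
  have : (2 ^ 1 <= 2 ^ k)%N by rewrite leq_exp2l.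
  rewrite expn1; lia.
have m0 : (0 < 2 ^ l + 1)%N by rewrite addn1.
have A : (forall u : F, inj_on_coset (2 ^ k) (f3 F (2 ^ k) (2 ^ l)) u)
     <-> coprime (2 ^ k - 1) (2 ^ l + 1).
  split.
  - move=> H; apply/negPn/negP => nco.
    have nN : (2 ^ k - 1 %| #|F|.-1)%N.
      rewrite cardF mulnC expnM.
      have := expn_gt0 2 k; set X := (2 ^ k)%N => X0.
      apply/dvdnP; exists (X * X + X + 1)%N; nia.
    have [a [b [ha hb hab ab]]] := pow_noninj n0 nN nco.
    rewrite -qpos in ha hb.
    apply: (negP ab); apply/eqP.
    have := H 0%R a b; rewrite !inE ha hb !eqxx => /(_ isT isT); apply.
    have e0 : (2 ^ k == 0)%N = false by rewrite expn_eq0.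
    have L0 : Lq (2 ^ k) (0%R : F) = 0%R.
      by rewrite /Lq !expr0n muln_eq0 e0 /= !addr0.
    rewrite !(key c2) // L0 !addr0.
    by rewrite addn1 in hab; rewrite hab.
  - move=> co u a b; rewrite !inE => /eqP ha /eqP hb e.
    rewrite !(key c2) // in e.
    move/addIr/addrI: e => e.
    have tfix : ((Lq (2 ^ k) u) ^+ (2 ^ k))%R = Lq (2 ^ k) u.
      rewrite /Lq !frob2 // -!exprM.
      have -> : (2 ^ k * 2 ^ k * 2 ^ k)%N = #|F|.
        by rewrite cardF -!expnD; congr (2 ^ _)%N; lia.
      rewrite expf_card.
      by rewrite [RHS]addrC addrA.
    have fa : ((a + Lq (2 ^ k) u) ^+ (2 ^ k - 1).+1 = a + Lq (2 ^ k) u)%R.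
      by rewrite -qpos frob2 // ha tfix.
    have fb : ((b + Lq (2 ^ k) u) ^+ (2 ^ k - 1).+1 = b + Lq (2 ^ k) u)%R.
      by rewrite -qpos frob2 // hb tfix.
    have := pow_inj n0 m0 co fa fb; rewrite addn1 => /(_ e).
    exact: addIr.
split; first exact: A.
exact: (iff_trans A (coprime_ord2 l k0)).
Qed.
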